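(* Let $\mathcal{F}$ be a Hilbert space and $N\ge1$. Let $\Omega_1(t),\dots,\Omega_N(t)$ be invertible, differentiable operators on $\mathcal{F}$. Set $\widetilde{\Sigma}_j(t)={\rm i}\,\Omega_j^{-1}(t)\dot\Omega_j(t)$, $\Sigma_{N+1}(t)=0$ and $\Sigma_j(t)=\widetilde\Sigma_j(t)+\Omega_j^{-1}(t)\Sigma_{j+1}(t)\Omega_j(t)$ for $j=N,\dots,1$. Let $\mathfrak a$ be a time-independent operator on $\mathcal F$, put $A_N(t)=\mathfrak a$, and define recursively $A_{j-1}(t)=\Omega_j^{-1}(t)A_j(t)\Omega_j(t)$ (i.e. $\Omega_j(t)A_{j-1}(t)=A_j(t)\Omega_j(t)$) for $j=N,\dots,1$. Then for every $k=1,\dots,N$, $${\rm i}\frac{d}{dt}A_{N-k}(t)=A_{N-k}(t)\,\Sigma_{N-k+1}(t)-\Sigma_{N-k+1}(t)\,A_{N-k}(t).$$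
   Context: $\dot\Omega_j(t)=\frac{d}{dt}\Omega_j(t)$. The $\Sigma_j$ are the composite quantum Coriolis forces; $A_j(t)$ represents an observable (self-adjoint, time-independent $\mathfrak a$ in the conventional picture $j=N$) in the $j$-th representation. *)

(* Defs.v *)
From HB Require Import structures.
From mathcomp Require Import all_boot all_order all_algebra.
From mathcomp Require Import all_classical all_reals all_analysis.
From mathcomp Require Export complex.
Set Implicit Arguments. Unset Strict Implicit. Unset Printing Implicit Defensive.
Import Order.TTheory GRing.Theory Num.Theory.
Import numFieldNormedType.Exports.
Local Open Scope ring_scope.
Local Open Scope complex_scope.

Definition hilbert_ip (R : realType) (H : completeNormedModType R[i])
    (ip : H -> H -> R[i]) : Prop :=
  [/\ forall a (u v w : H), ip (a *: u + v) w = a * ip u w + ip v w,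
      forall u v : H, ip v u = (ip u v)^*,
      forall v : H, 0 <= ip v v &
      forall v : H, `|v| ^+ 2 = ip v v].

Definition bounded_op (R : realType) (H : normedModType R[i]) (X : H -> H) : Prop :=
  (forall (a : R[i]) (u v : H), X (a *: u + v) = a *: X u + X v) /\
  exists M : R, forall v : H, `|X v| <= M%:C * `|v|.

(* X' t is the derivative at t of the operator-valued function X, in the
   operator-norm (uniform) topology: for every e > 0 there is d > 0 with
   || X(t+h) - X(t) - h X'(t) ||_op <= e |h|  whenever |h| < d. *)
Definition op_deriv (R : realType) (H : normedModType R[i])
    (X X' : R -> H -> H) (t : R) : Prop :=
  forall e : R, 0 < e -> exists2 d : R, 0 < d &
    forall h : R, `|h| < d -> forall v : H,
      `|X (t + h) v - X t v - h%:C *: X' t v| <= (e * `|h|)%:C * `|v|.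

Definition opcomp (T : Type) (X Y : T -> T) : T -> T := fun v => X (Y v).
Definition opsub (R : realType) (H : normedModType R[i]) (X Y : H -> H) : H -> H :=
  fun v => X v - Y v.
Definition opadd (R : realType) (H : normedModType R[i]) (X Y : H -> H) : H -> H :=
  fun v => X v + Y v.
Definition opscale (R : realType) (H : normedModType R[i]) (a : R[i]) (X : H -> H)
  : H -> H := fun v => a *: X v.

(* Sigma_aux m t = Sigma_{N+1-m}(t):
   Sigma_{N+1} = 0,
   Sigma_j = i Om_j^{-1} dOm_j + Om_j^{-1} Sigma_{j+1} Om_j. *)
Fixpoint Sigma_aux (R : realType) (H : normedModType R[i]) (N : nat)
    (Om Omi Omd : nat -> R -> H -> H) (m : nat) (t : R) : H -> H :=
  match m with
  | 0 => fun _ => 0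
  | m'.+1 =>
      let j := (N - m')%N in
      opadd (opscale 'i (opcomp (Omi j t) (Omd j t)))
            (opcomp (Omi j t) (opcomp (Sigma_aux N Om Omi Omd m' t) (Om j t)))
  end.

(* Sigma j t = Sigma_j(t), for 1 <= j <= N+1 *)
Definition Sigma (R : realType) (H : normedModType R[i]) (N : nat)
    (Om Omi Omd : nat -> R -> H -> H) (j : nat) (t : R) : H -> H :=
  Sigma_aux N Om Omi Omd (N.+1 - j) t.

(* A_aux m t = A_{N-m}(t): A_N = a, A_{j-1} = Om_j^{-1} A_j Om_j. *)
Fixpoint A_aux (R : realType) (H : normedModType R[i]) (N : nat)
    (Om Omi : nat -> R -> H -> H) (a : H -> H) (m : nat) (t : R) : H -> H :=
  match m with
  | 0 => a
  | m'.+1 => let j := (N - m')%N in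
             opcomp (Omi j t) (opcomp (A_aux N Om Omi a m' t) (Om j t))
  end.

(* Aop j t = A_j(t), for 0 <= j <= N *)
Definition Aop (R : realType) (H : normedModType R[i]) (N : nat)
    (Om Omi : nat -> R -> H -> H) (a : H -> H) (j : nat) (t : R) : H -> H :=
  A_aux N Om Omi a (N - j) t.

(* Main.v *)
Require Import Defs.
From HB Require Import structures.
From mathcomp Require Import all_boot all_order all_algebra.
From mathcomp Require Import all_classical all_reals all_analysis.
From mathcomp Require Import complex.
From mathcomp Require Import ring lra.
Import Order.TTheory GRing.Theory Num.Theory.
Import numFieldNormedType.Exports.
Local Open Scope ring_scope.
Local Open Scope complex_scope.
Set Implicit Arguments. Unset Strict Implicit. Unset Printing Implicit Defensive.
Definition nv (R : realType) (H : normedModType R[i]) (v : H) : R := complex.Re `|v|.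

Lemma ge0_RE (R : realType) (x : R[i]) : 0 <= x -> x = (complex.Re x)%:C.
Proof. case: x => a b; rewrite lecE /= => /andP [/eqP -> _]. by []. Qed.

Lemma nvE (R : realType) (H : normedModType R[i]) (v : H) : `|v| = (nv v)%:C.
Proof. by rewrite /nv -ge0_RE. Qed.

Lemma nv_ge0 (R : realType) (H : normedModType R[i]) (v : H) : 0 <= nv v.
Proof. by rewrite -ler0c -nvE. Qed.

Lemma nvD (R : realType) (H : normedModType R[i]) (u v : H) : nv (u + v) <= nv u + nv v.
Proof. by rewrite -lecR rmorphD /= -!nvE ler_normD. Qed.

Lemma nvN (R : realType) (H : normedModType R[i]) (v : H) : nv (- v) = nv v.
Proof. by rewrite /nv normrN. Qed.

Lemma nvB (R : realType) (H : normedModType R[i]) (u v : H) : nv (u - v) <= nv u + nv v.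
Proof. by rewrite -(nvN v) nvD. Qed.

Lemma normC_real (R : realType) (x : R) : `|x%:C| = `|x|%:C.
Proof. by rewrite normc_def /= expr0n /= addr0 sqrtr_sqr. Qed.

Lemma nvZ (R : realType) (H : normedModType R[i]) (h : R) (v : H) :
  nv (h%:C *: v) = `|h| * nv v.
Proof. by apply: complexI; rewrite rmorphM /= -!nvE normrZ normC_real. Qed.

Lemma nv_i (R : realType) (H : normedModType R[i]) (v : H) : nv ('i *: v) = nv v.
Proof.
apply: complexI; rewrite -!nvE normrZ normc_def /= expr0n /= add0r expr1n sqrtr1.
by rewrite mul1r.
Qed.
Definition bnd (R : realType) (H : normedModType R[i]) (X : H -> H) :=
  exists2 M : R, 0 <= M & forall v, nv (X v) <= M * nv v.
Definition lin (R : realType) (H : normedModType R[i]) (X : H -> H) :=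
  forall (a : R[i]) (u v : H), X (a *: u + v) = a *: X u + X v.
Definition locbnd (R : realType) (H : normedModType R[i]) (A : R -> H -> H) :=
  exists K : R, 0 <= K /\ exists2 d : R, 0 < d &
    forall h : R, `|h| < d -> forall v, nv (A h v) <= K * nv v.
Definition bigO (R : realType) (H : normedModType R[i]) (Z : R -> H -> H) :=
  exists C : R, 0 <= C /\ exists2 d : R, 0 < d &
    forall h : R, `|h| < d -> forall v, nv (Z h v) <= C * `|h| * nv v.
Definition little (R : realType) (H : normedModType R[i]) (E : R -> H -> H) :=
  forall e : R, 0 < e -> exists2 d : R, 0 < d &
    forall h : R, `|h| < d -> forall v, nv (E h v) <= e * `|h| * nv v.

Lemma kfrac (R : realType) (K e : R) : 0 <= K -> 0 < e -> K * (e / (K + 1)) <= e.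
Proof.
move=> K0 e0; rewrite mulrA ler_pdivrMr; last by lra.
nra.
Qed.

Lemma kfrac_pos (R : realType) (K e : R) : 0 <= K -> 0 < e -> 0 < e / (K + 1).
Proof. move=> K0 e0; apply: divr_gt0 => //; lra. Qed.

Lemma op_derivE (R : realType) (H : normedModType R[i]) (X X' : R -> H -> H) t :
  op_deriv X X' t <-> little (fun h v => X (t + h) v - X t v - h%:C *: X' t v).
Proof.
split=> D e /D [d d0 Hd]; exists d => // h /Hd Hh v; move: (Hh v).
  by rewrite !nvE -!rmorphM /= lecR.
by rewrite !nvE -!rmorphM /= lecR.
Qed.

Lemma bnd_of_bounded (R : realType) (H : normedModType R[i]) (X : H -> H) :
  bounded_op X -> lin X /\ bnd X.
Proof.
move=> [L [M HM]]; split => //; exists (Num.max M 0); first by rewrite le_max lexx orbT.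
move=> v; apply: le_trans (_ : M * nv v <= _).
  by move: (HM v); rewrite !nvE -rmorphM lecR.
by apply: ler_wpM2r; [exact: nv_ge0 | rewrite le_max lexx].
Qed.

Lemma lb_const (R : realType) (H : normedModType R[i]) (X : H -> H) :
  bnd X -> locbnd (fun _ : R => X).
Proof. by move=> [M M0 HM]; exists M; split => //; exists 1 => // h _ v; apply: HM. Qed.

Lemma little_compl (R : realType) (H : normedModType R[i]) (A E : R -> H -> H) :
  locbnd A -> little E -> little (fun h v => A h (E h v)).
Proof.
move=> [K [K0 [d0 d0p HA]]] HE e e0.
case: (HE _ (kfrac_pos K0 e0)) => d1 d1p H1.
exists (Num.min d0 d1); first by rewrite lt_min d0p.
move=> h; rewrite lt_min => /andP[hd0 hd1] v.
apply: le_trans (HA _ hd0 _) _.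
apply: le_trans (ler_wpM2l K0 (H1 _ hd1 v)) _.
rewrite !mulrA; apply: ler_wpM2r; first exact: nv_ge0.
by apply: ler_wpM2r; [exact: normr_ge0 | rewrite -mulrA; exact: kfrac].
Qed.

Lemma little_compr (R : realType) (H : normedModType R[i]) (E Y : R -> H -> H) :
  little E -> locbnd Y -> little (fun h v => E h (Y h v)).
Proof.
move=> HE [K [K0 [d0 d0p HA]]] e e0.
case: (HE _ (kfrac_pos K0 e0)) => d1 d1p H1.
exists (Num.min d0 d1); first by rewrite lt_min d0p.
move=> h; rewrite lt_min => /andP[hd0 hd1] v.
apply: le_trans (H1 _ hd1 _) _.
have hp : 0 <= e / (K + 1) * `|h| by apply: mulr_ge0; [apply: ltW; exact: kfrac_pos|].
apply: le_trans (ler_wpM2l hp (HA _ hd0 v)) _.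
rewrite mulrA; apply: ler_wpM2r; first exact: nv_ge0.
rewrite mulrAC; apply: ler_wpM2r; first exact: normr_ge0.
by rewrite mulrC; apply: kfrac.
Qed.

Lemma little_add (R : realType) (H : normedModType R[i]) (E F : R -> H -> H) :
  little E -> little F -> little (fun h v => E h v + F h v).
Proof.
move=> HE HF e e0.
have e2 : 0 < e / 2 by apply: divr_gt0.
case: (HE _ e2) => d1 d1p H1; case: (HF _ e2) => d2 d2p H2.
exists (Num.min d1 d2); first by rewrite lt_min d1p.
move=> h; rewrite lt_min => /andP[hd1 hd2] v.
apply: le_trans (nvD _ _) _.
have := H1 _ hd1 v; have := H2 _ hd2 v; lra.
Qed.

Lemma little_opp (R : realType) (H : normedModType R[i]) (E : R -> H -> H) :
  little E -> little (fun h v => - E h v).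
Proof. by move=> HE e /HE [d d0 Hd]; exists d => // h /Hd Hh v; rewrite nvN. Qed.

Lemma little_ext (R : realType) (H : normedModType R[i]) (E F : R -> H -> H) :
  (forall h v, E h v = F h v) -> little F -> little E.
Proof. by move=> EF HF e /HF [d d0 Hd]; exists d => // h /Hd Hh v; rewrite EF. Qed.

Lemma bigO_compl (R : realType) (H : normedModType R[i]) (A Z : R -> H -> H) :
  locbnd A -> bigO Z -> bigO (fun h v => A h (Z h v)).
Proof.
move=> [K [K0 [d0 d0p HA]]] [C [C0 [d1 d1p H1]]].
exists (K * C); split; first exact: mulr_ge0.
exists (Num.min d0 d1); first by rewrite lt_min d0p.
move=> h; rewrite lt_min => /andP[hd0 hd1] v.
apply: le_trans (HA _ hd0 _) _.
apply: le_trans (ler_wpM2l K0 (H1 _ hd1 v)) _.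
by rewrite !mulrA.
Qed.

Lemma bigO_compr (R : realType) (H : normedModType R[i]) (Z Y : R -> H -> H) :
  bigO Z -> locbnd Y -> bigO (fun h v => Z h (Y h v)).
Proof.
move=> [C [C0 [d1 d1p H1]]] [K [K0 [d0 d0p HA]]].
exists (C * K); split; first exact: mulr_ge0.
exists (Num.min d0 d1); first by rewrite lt_min d0p.
move=> h; rewrite lt_min => /andP[hd0 hd1] v.
apply: le_trans (H1 _ hd1 _) _.
have hp : 0 <= C * `|h| by apply: mulr_ge0.
apply: le_trans (ler_wpM2l hp (HA _ hd0 v)) _.
by rewrite !mulrA [C * `|h| * K]mulrAC.
Qed.

Lemma little_Oh (R : realType) (H : normedModType R[i]) (W : R -> H -> H) :
  bigO W -> little (fun h v => h%:C *: W h v).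
Proof.
move=> [C [C0 [d0 d0p HW]]] e e0.
exists (Num.min d0 (e / (C + 1))); first by rewrite lt_min d0p kfrac_pos.
move=> h; rewrite lt_min => /andP[hd0 hd1] v.
rewrite nvZ.
have := HW _ hd0 v; have := nv_ge0 v; have := normr_ge0 h.
have : `|h| * (C + 1) < e by rewrite -ltr_pdivlMr //; lra.
set a := `|h|; set n := nv v; set w := nv (W h v) => h1 h2 h3 h4.
have : a * w <= a * (C * a * n) by apply: ler_wpM2l.
have : C * a * n * a <= e * a * n.
  have : 0 <= a * n by apply: mulr_ge0.
  nra.
nra.
Qed.

Lemma deriv_bigO (R : realType) (H : normedModType R[i]) (Y Y' : R -> H -> H) t :
  op_deriv Y Y' t -> bnd (Y' t) -> bigO (fun h v => Y (t + h) v - Y t v).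
Proof.
move=> /op_derivE D [M M0 HM].
case: (D 1 ltr01) => d d0 Hd.
exists (1 + M); split; first lra.
exists d => // h hd v.
have -> : Y (t + h) v - Y t v = (Y (t + h) v - Y t v - h%:C *: Y' t v) + h%:C *: Y' t v.
  by rewrite subrK.
apply: le_trans (nvD _ _) _; rewrite nvZ.
have := Hd _ hd v; have := HM v; have := normr_ge0 h.
set a := `|h|; set n := nv v => h1 h2 h3.
have : a * nv (Y' t v) <= a * (M * n) by apply: ler_wpM2l.
lra.
Qed.

Lemma bigO_lb (R : realType) (H : normedModType R[i]) (Y : R -> H -> H) t :
  bnd (Y t) -> bigO (fun h v => Y (t + h) v - Y t v) -> locbnd (fun h => Y (t + h)).
Proof.
move=> [M M0 HM] [C [C0 [d0 d0p HZ]]].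
exists (C + M); split; first lra.
exists (Num.min d0 1); first by rewrite lt_min d0p ltr01.
move=> h; rewrite lt_min => /andP[hd0 hd1] v.
have -> : Y (t + h) v = (Y (t + h) v - Y t v) + Y t v by rewrite subrK.
apply: le_trans (nvD _ _) _.
have := HZ _ hd0 v; have := HM v; have := nv_ge0 v; have := normr_ge0 h.
set a := `|h|; set n := nv v => h1 h2 h3 h4.
have : C * a * n <= C * n.
  by rewrite -mulrA; apply: ler_wpM2l => //; rewrite -[X in _ <= X]mul1r; apply: ler_wpM2r => //; apply: ltW.
lra.
Qed.
Lemma zid1 (V : zmodType) (a b c d e f : V) :
  (a - b - c) + (b - e - f) + (c - d) = a - e - (d + f).
Proof.
rewrite opprD addrA -[a - b - c + _]addrA [_ + (b - e - f)]addrC !addrA subrK.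
by rewrite subrK addrAC.
Qed.

Lemma zid2 (V : zmodType) (x y c w : V) : -(x - y - c) + (w - c) = y - x - - w.
Proof. by rewrite opprK !opprB addrC addrA subrK addrC. Qed.


Lemma lin0 (R : realType) (H : normedModType R[i]) (X : H -> H) : lin X -> X 0 = 0.
Proof.
move=> L; have := L 1 0 0; rewrite !scale1r addr0 => E.
have E' : X 0 + 0 = X 0 + X 0 by rewrite addr0 {1}E.
exact/esym/(addrI _ E').
Qed.

Lemma linD (R : realType) (H : normedModType R[i]) (X : H -> H) u v :
  lin X -> X (u + v) = X u + X v.
Proof. by move=> L; have := L 1 u v; rewrite !scale1r. Qed.

Lemma linZ (R : realType) (H : normedModType R[i]) (X : H -> H) a u :
  lin X -> X (a *: u) = a *: X u.
Proof. by move=> L; rewrite -[a *: u]addr0 L lin0 // addr0. Qed.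

Lemma linN (R : realType) (H : normedModType R[i]) (X : H -> H) u :
  lin X -> X (- u) = - X u.
Proof. by move=> L; rewrite -scaleN1r linZ // scaleN1r. Qed.

Lemma linB (R : realType) (H : normedModType R[i]) (X : H -> H) u v :
  lin X -> X (u - v) = X u - X v.
Proof. by move=> L; rewrite linD // linN. Qed.

Lemma lin_comp (R : realType) (H : normedModType R[i]) (X Y : H -> H) :
  lin X -> lin Y -> lin (fun v => X (Y v)).
Proof. by move=> LX LY a u v; rewrite LY LX. Qed.

Lemma lin_add (R : realType) (H : normedModType R[i]) (X Y : H -> H) :
  lin X -> lin Y -> lin (fun v => X v + Y v).
Proof.
move=> LX LY a u v; rewrite LX LY scalerDr.
by rewrite -!addrA; congr (_ + _); rewrite addrCA.
Qed.

Lemma lin_opp (R : realType) (H : normedModType R[i]) (X : H -> H) :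
  lin X -> lin (fun v => - X v).
Proof. by move=> LX a u v; rewrite LX opprD scalerN. Qed.

Lemma bnd_comp (R : realType) (H : normedModType R[i]) (X Y : H -> H) :
  bnd X -> bnd Y -> bnd (fun v => X (Y v)).
Proof.
move=> [M M0 HM] [N N0 HN]; exists (M * N); first exact: mulr_ge0.
by move=> v; apply: le_trans (HM _) _; rewrite -mulrA; apply: ler_wpM2l.
Qed.

Lemma bnd_add (R : realType) (H : normedModType R[i]) (X Y : H -> H) :
  bnd X -> bnd Y -> bnd (fun v => X v + Y v).
Proof.
move=> [M M0 HM] [N N0 HN]; exists (M + N); first exact: addr_ge0.
move=> v; apply: le_trans (nvD _ _) _; have := HM v; have := HN v; lra.
Qed.

Lemma bnd_opp (R : realType) (H : normedModType R[i]) (X : H -> H) :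
  bnd X -> bnd (fun v => - X v).
Proof. by move=> [M M0 HM]; exists M => // v; rewrite nvN. Qed.

Lemma deriv_comp (R : realType) (H : normedModType R[i]) (X X' Y Y' : R -> H -> H) t :
  op_deriv X X' t -> op_deriv Y Y' t -> lin (X t) -> bnd (X t) ->
  lin (X' t) -> bnd (X' t) -> bnd (Y t) -> bnd (Y' t) ->
  op_deriv (fun s => opcomp (X s) (Y s)) (fun s v => X' s (Y s v) + X s (Y' s v)) t.
Proof.
move=> DX DY LX BX LX' BX' BY BY'.
have lX := proj1 (op_derivE _ _ _) DX.
have lY := proj1 (op_derivE _ _ _) DY.
have ZY := deriv_bigO DY BY'.
apply/op_derivE.
apply: (little_ext (F := fun h v =>
  (X (t + h) (Y (t + h) v) - X t (Y (t + h) v) - h%:C *: X' t (Y (t + h) v))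
  + X t (Y (t + h) v - Y t v - h%:C *: Y' t v)
  + h%:C *: X' t (Y (t + h) v - Y t v))).
  move=> h v /=; rewrite /opcomp !(linB _ _ LX) (linZ _ _ LX) (linB _ _ LX').
  by rewrite scalerBr scalerDr zid1.
apply: little_add; first apply: little_add.
- by have := little_compr lX (bigO_lb BY ZY).
- by have := little_compl (lb_const BX) lY.
- by have := little_Oh (bigO_compl (lb_const BX') ZY).
Qed.

Lemma deriv_inv (R : realType) (H : normedModType R[i]) (Om Omi Omd : R -> H -> H) t :
  (forall s, lin (Omi s)) -> (forall s v, Om s (Omi s v) = v) ->
  (forall s v, Omi s (Om s v) = v) ->
  op_deriv Om Omd t -> bnd (Omi t) -> bnd (Omd t) ->
  op_deriv Omi (fun s v => - Omi s (Omd s (Omi s v))) t.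
Proof.
move=> LOmi OmK OmiK DOm BOmi BOmd.
have Z := deriv_bigO DOm BOmd.
have lE := proj1 (op_derivE _ _ _) DOm.
have LB : locbnd (fun h => Omi (t + h)).
  case: (Z) => C [C0 [d0 d0p HZ]]; case: (BOmi) => Mi Mi0 HMi.
  exists (2 * Mi); split; first lra.
  have dp : 0 < 1 / (2 * (Mi * C + 1)).
    apply: divr_gt0; first exact: ltr01.
    have : 0 <= Mi * C by apply: mulr_ge0.
    lra.
  exists (Num.min d0 (1 / (2 * (Mi * C + 1)))); first by rewrite lt_min d0p.
  move=> h; rewrite lt_min => /andP[hd0 hd1] v.
  set w := Omi (t + h) v.
  have Hw : nv w <= Mi * nv (Om t w) by rewrite -{1}(OmiK t w); apply: HMi.
  have Hom : nv (Om t w) <= nv v + C * `|h| * nv w.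
    have -> : Om t w = Om (t + h) w - (Om (t + h) w - Om t w) by rewrite opprB addrC subrK.
    have Ow : Om (t + h) w = v by rewrite /w OmK.
    apply: le_trans (nvB _ _) _; rewrite {1}Ow.
    by apply: lerD => //; apply: HZ.
  have hs : `|h| * (2 * (Mi * C + 1)) < 1.
    rewrite -ltr_pdivlMr //.
    have : 0 <= Mi * C by apply: mulr_ge0.
    lra.
  have := nv_ge0 w; have := nv_ge0 v; have := normr_ge0 h.
  have : Mi * nv (Om t w) <= Mi * (nv v + C * `|h| * nv w) by apply: ler_wpM2l.
  have : 0 <= Mi * C by apply: mulr_ge0.
  set a := `|h|; set n := nv v; set m := nv w; set o := nv (Om t w).
  move=> MC0 h1 h2 h3 h4.
  have h5 : Mi * C * a <= 1/2.
    have e : a * (2 * (Mi * C + 1)) = 2 * (Mi * C * a) + 2 * a by ring.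
    rewrite e in hs; lra.
  have : Mi * C * a * m <= m / 2.
    have := ler_wpM2r h4 h5; lra.
  nra.
apply/op_derivE.
apply: (little_ext (F := fun h v =>
  - Omi (t + h) (Om (t + h) (Omi t v) - Om t (Omi t v) - h%:C *: Omd t (Omi t v))
  + h%:C *: Omi (t + h) (Om (t + h) (Omi t (Omd t (Omi t v)))
                          - Om t (Omi t (Omd t (Omi t v)))))).
  move=> h v /=; rewrite !(linB _ _ (LOmi (t + h))) (linZ _ _ (LOmi (t + h))).
  by rewrite !OmiK !OmK scalerBr scalerN zid2.
have BC : bnd (fun v => Omi t (Omd t (Omi t v))) by exact: (bnd_comp BOmi (bnd_comp BOmd BOmi)).
apply: little_add.
- apply: little_opp.
  by have := little_compl LB (little_compr lE (lb_const BOmi)).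
- by have := little_Oh (bigO_compl LB (bigO_compr Z (lb_const BC))).
Qed.
Lemma zid3 (V : zmodType) (x y z w : V) : - x + ((y - z) + w) = (w + y) - (x + z).
Proof.
by rewrite opprD addrACA [(y - z) + w]addrC [- x + (w + _)]addrA [- x + w]addrC.
Qed.

Lemma little0 (R : realType) (H : normedModType R[i]) :
  little (fun (_ : R) (_ : H) => 0 : H).
Proof.
move=> e e0; exists 1 => // h _ v.
rewrite /nv normr0 /=; apply: mulr_ge0; last exact: nv_ge0.
by apply: mulr_ge0; [exact: ltW | exact: normr_ge0].
Qed.

Lemma main_ind (R : realType) (H : normedModType R[i]) (N : nat)
    (Om Omi Omd : nat -> R -> H -> H) (a : H -> H) :
  (forall j t, (1 <= j <= N)%N ->
     [/\ bounded_op (Om j t), bounded_op (Omi j t), bounded_op (Omd j t),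
         (forall v, Om j t (Omi j t v) = v) &
         (forall v, Omi j t (Om j t v) = v)]) ->
  (forall j t, (1 <= j <= N)%N -> op_deriv (Om j) (Omd j) t) ->
  bounded_op a ->
  forall m, (m <= N)%N ->
    (forall t, lin (A_aux N Om Omi a m t) /\ bnd (A_aux N Om Omi a m t)) /\
    exists dA : R -> H -> H, forall t,
      [/\ op_deriv (A_aux N Om Omi a m) dA t, lin (dA t), bnd (dA t) &
        forall v, 'i *: dA t v =
          A_aux N Om Omi a m t (Sigma_aux N Om Omi Omd m t v)
          - Sigma_aux N Om Omi Omd m t (A_aux N Om Omi a m t v)].
Proof.
move=> Hinv Hder Ha; elim=> [_ | m IH mN].
  have [La Ba] := bnd_of_bounded Ha.
  split=> [t | ]; first by split.
  exists (fun _ _ => 0) => t; split.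
  - apply/op_derivE; apply: (little_ext (F := fun _ _ => 0)); last exact: little0.
    by move=> h v /=; rewrite scaler0 subr0 subrr.
  - by move=> c u v; rewrite scaler0 addr0.
  - by exists 0 => // v; rewrite /nv normr0 mul0r.
  - by move=> v /=; rewrite scaler0 lin0 // subr0.
have [LA [dA HdA]] : (forall t, lin (A_aux N Om Omi a m t) /\ bnd (A_aux N Om Omi a m t)) /\
    exists dA : R -> H -> H, forall t,
      [/\ op_deriv (A_aux N Om Omi a m) dA t, lin (dA t), bnd (dA t) &
        forall v, 'i *: dA t v =
          A_aux N Om Omi a m t (Sigma_aux N Om Omi Omd m t v)
          - Sigma_aux N Om Omi Omd m t (A_aux N Om Omi a m t v)].
  by apply: IH; apply: ltnW.
set j := (N - m)%N.
have jN : (1 <= j <= N)%N by rewrite /j; apply/andP; split; rewrite ?subn_gt0 ?leq_subr.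
have HI s := Hinv j s jN.
have LO s : lin (Om j s) by case: (HI s) => /bnd_of_bounded [].
have BO s : bnd (Om j s) by case: (HI s) => /bnd_of_bounded [].
have LI s : lin (Omi j s) by case: (HI s) => _ /bnd_of_bounded [].
have BI s : bnd (Omi j s) by case: (HI s) => _ /bnd_of_bounded [].
have LD s : lin (Omd j s) by case: (HI s) => _ _ /bnd_of_bounded [].
have BD s : bnd (Omd j s) by case: (HI s) => _ _ /bnd_of_bounded [].
have OK s v : Om j s (Omi j s v) = v by case: (HI s).
have KO s v : Omi j s (Om j s v) = v by case: (HI s).
have LA' s : lin (A_aux N Om Omi a m s) by case: (LA s).
have BA' s : bnd (A_aux N Om Omi a m s) by case: (LA s).
split.
  move=> t; split.
  - exact: (lin_comp (LI t) (lin_comp (LA' t) (LO t))).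
  - exact: (bnd_comp (BI t) (bnd_comp (BA' t) (BO t))).
exists (fun s v => - Omi j s (Omd j s (Omi j s (A_aux N Om Omi a m s (Om j s v))))
         + Omi j s (dA s (Om j s v) + A_aux N Om Omi a m s (Omd j s v))) => t.
have [DA LdA BdA EdA] := HdA t.
have LIp : lin (fun v => - Omi j t (Omd j t (Omi j t v))).
  exact: (lin_opp (lin_comp (LI t) (lin_comp (LD t) (LI t)))).
have BIp : bnd (fun v => - Omi j t (Omd j t (Omi j t v))).
  exact: (bnd_opp (bnd_comp (BI t) (bnd_comp (BD t) (BI t)))).
have LP' : lin (fun v => dA t (Om j t v) + A_aux N Om Omi a m t (Omd j t v)).
  exact: (lin_add (lin_comp LdA (LO t)) (lin_comp (LA' t) (LD t))).
have BP' : bnd (fun v => dA t (Om j t v) + A_aux N Om Omi a m t (Omd j t v)).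
  exact: (bnd_add (bnd_comp BdA (BO t)) (bnd_comp (BA' t) (BD t))).
split.
- have DP := deriv_comp DA (Hder j t jN) (LA' t) (BA' t) LdA BdA (BO t) (BD t).
  have DI := deriv_inv (Om := Om j) LI OK KO (Hder j t jN) (BI t) (BD t).
  have := deriv_comp DI DP (LI t) (BI t) LIp BIp
    (bnd_comp (BA' t) (BO t)) BP'.
  by [].
- exact (lin_add (lin_comp LIp (lin_comp (LA' t) (LO t))) (lin_comp (LI t) LP')).
- exact (bnd_add (bnd_comp BIp (bnd_comp (BA' t) (BO t))) (bnd_comp (BI t) BP')).
- move=> v /=; rewrite /opadd /opscale /opcomp -/j.
  have E1 : 'i *: Omi j t (dA t (Om j t v)) =
      Omi j t (A_aux N Om Omi a m t (Sigma_aux N Om Omi Omd m t (Om j t v)))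
      - Omi j t (Sigma_aux N Om Omi Omd m t (A_aux N Om Omi a m t (Om j t v)))
    by rewrite -(linZ _ _ (LI t)) EdA (linB _ _ (LI t)).
  have E2 : Om j t ('i *: Omi j t (Omd j t v) + Omi j t (Sigma_aux N Om Omi Omd m t (Om j t v)))
      = 'i *: Omd j t v + Sigma_aux N Om Omi Omd m t (Om j t v)
    by rewrite (linD _ _ (LO t)) (linZ _ _ (LO t)) !OK.
  rewrite (linD _ _ (LI t)) scalerDr scalerN scalerDr E1 E2.
  rewrite (linD _ _ (LA' t)) (linZ _ _ (LA' t)) (linD _ _ (LI t)) (linZ _ _ (LI t)).
  by rewrite OK zid3.
Qed.

Theorem theorem3 (R : realType) (H : completeNormedModType R[i])
    (ip : H -> H -> R[i]) (N : nat)
    (Om Omi Omd : nat -> R -> H -> H) (a : H -> H) :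
  hilbert_ip ip ->
  (1 <= N)%N ->
  (forall j t, (1 <= j <= N)%N ->
     [/\ bounded_op (Om j t), bounded_op (Omi j t), bounded_op (Omd j t),
         (forall v, Om j t (Omi j t v) = v) &
         (forall v, Omi j t (Om j t v) = v)]) ->
  (forall j t, (1 <= j <= N)%N -> op_deriv (Om j) (Omd j) t) ->
  bounded_op a ->
  forall k : nat, (1 <= k <= N)%N ->
    exists dA : R -> H -> H,
      (forall t, op_deriv (Aop N Om Omi a (N - k)) dA t) /\
      (forall t v, 'i *: dA t v =
         Aop N Om Omi a (N - k) t (Sigma N Om Omi Omd (N - k).+1 t v)
         - Sigma N Om Omi Omd (N - k).+1 t (Aop N Om Omi a (N - k) t v)).
Proof.
move=> _ _ Hinv Hder Ha k /andP[k1 kN].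
have [_ [dA HdA]] := main_ind Hinv Hder Ha kN.
exists dA; rewrite /Aop /Sigma subSS subKn //; split.
- by move=> t; case: (HdA t).
- by move=> t v; case: (HdA t).
Qed.
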